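(* Let $k\ge 1$, $0\le r<k$ and $n\ge1$ be integers, and let $$B_n(k,r,x;q)=\left(\begin{bmatrix} i-k+r+1\\ i-j\end{bmatrix}_q x^k+q^{(k-1)j}\begin{bmatrix} i+r+1\\ i-j+1\end{bmatrix}_q\right)_{i,j=0}^{n-1}.$$ Then $x^r\det B_n(k,r,x;q)=F^{(k)}_{kn+r}(x;q)$.
   Context: Here $q$ is an indeterminate and all quantities lie in $\mathbb{Q}(q)[x]$. The $q$-binomial coefficient is defined for integers $m$ (possibly negative) and $j$ by $\begin{bmatrix} m\\ j\end{bmatrix}_q=\prod_{t=0}^{j-1}\frac{1-q^{m-t}}{1-q^{t+1}}$ if $j\ge0$ and $0$ if $j<0$. For an integer $k\ge1$, the $q$-Fibonacci polynomials $F^{(k)}_n(x;q)$ ($n\ge0$) are defined by $F^{(k)}_n(x;q)=x^n$ for $0\le n<k$ and $F^{(k)}_{n+k}(x;q)=xF^{(k)}_{n+k-1}(x;q)+q^nF^{(k)}_n(x;q)$ for $n\ge0$. *)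

(* Defs.v *)
(* Q(q) is modelled as the fraction field of {poly rat},
   with q the image of the polynomial indeterminate. *)
From HB Require Import structures.
From mathcomp Require Import all_boot all_order all_algebra.
Set Implicit Arguments. Unset Strict Implicit. Unset Printing Implicit Defensive.
Import Order.TTheory GRing.Theory Num.Theory.
Local Open Scope ring_scope.

Definition Qq : fieldType := {fraction {poly rat}}.

Definition q : Qq := tofrac ('X : {poly rat}).

Definition qbinom (m j : int) : Qq :=
  match j with
  | Posz j' => \prod_(t < j') ((1 - q ^ (m - (t : nat)%:Z)) / (1 - q ^ ((t.+1)%:Z)))
  | Negz _ => 0
  end.

Definition Bmat (n k r : nat) : 'M[{poly Qq}]_n :=
  \matrix_(i < n, j < n)
    ((qbinom ((i : nat)%:Z - k%:Z + r%:Z + 1) ((i : nat)%:Z - (j : nat)%:Z))%:P * 'X^k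
     + (q ^+ ((k - 1) * j)%N * qbinom ((i : nat)%:Z + r%:Z + 1) ((i : nat)%:Z - (j : nat)%:Z + 1))%:P).

Fixpoint qfib_fuel (fuel k n : nat) : {poly Qq} :=
  match fuel with
  | 0 => 0
  | fuel'.+1 =>
      if (n < k)%N then 'X^n
      else 'X * qfib_fuel fuel' k (n - 1)%N + (q ^+ (n - k)%N)%:P * qfib_fuel fuel' k (n - k)%N
  end.

Definition qfib (k n : nat) : {poly Qq} := qfib_fuel n.+1 k n.

(* Main.v *)
Require Import Defs.
From HB Require Import structures.
From mathcomp Require Import all_boot all_order all_algebra.
From mathcomp Require Import ring zify.
Import GRing.Theory.
Local Open Scope ring_scope.

Lemma q_neq0 : q != 0.
Proof. by rewrite /q tofrac_eq0 polyX_eq0. Qed.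

Lemma qXn_neq1 (n : nat) : (0 < n)%N -> q ^+ n != 1.
Proof.
move=> hn; rewrite /q -tofracXn -tofrac1 tofrac_eq.
apply/eqP => /(congr1 (size : {poly rat} -> nat)).
by rewrite size_polyXn size_poly1; case: n hn.
Qed.

Lemma qD (a b : int) : q ^ (a + b) = q ^ a * q ^ b.
Proof. by rewrite expfzDr // q_neq0. Qed.

Lemma qN (a : int) : q ^ (- a) = (q ^ a)^-1.
Proof. by rewrite invr_expz. Qed.

Definition num (m : int) (l : nat) : Qq := \prod_(t < l) (1 - q ^ (m - (t : nat)%:Z)).
Definition den (l : nat) : Qq := \prod_(t < l) (1 - q ^ ((t.+1)%:Z)).

Lemma qbE (m : int) (l : nat) : qbinom m l = num m l / den l.
Proof. by rewrite /qbinom /num /den big_split /= prodfV. Qed.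

Lemma den_neq0 l : den l != 0.
Proof.
apply/prodf_neq0 => t _; rewrite subr_eq0 eq_sym.
exact: qXn_neq1.
Qed.

Lemma denS l : den l.+1 = den l * (1 - q ^+ l.+1).
Proof. by rewrite /den big_ord_recr. Qed.

Lemma numSr m l : num m l.+1 = num m l * (1 - q ^ (m - l%:Z)).
Proof. by rewrite /num big_ord_recr. Qed.

Lemma numSl m l : num m l.+1 = (1 - q ^ m) * num (m - 1) l.
Proof.
rewrite /num big_ord_recl /= subr0; congr (_ * _).
apply: eq_bigr => t _ /=; do 3 f_equal; rewrite /bump /=; lia.
Qed.

Lemma qb0 m : qbinom m 0 = 1.
Proof. by rewrite qbE /num /den !big_ord0 divr1. Qed.

Lemma qb_neg m (z : int) : (z < 0)%R -> qbinom m z = 0.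
Proof. by case: z. Qed.

Lemma qbSr m (l : nat) :
  qbinom m l.+1 = qbinom m l * (1 - q ^ (m - l%:Z)) / (1 - q ^+ l.+1).
Proof.
rewrite !qbE numSr denS invfM.
rewrite !mulrA; congr (_ * _); rewrite -!mulrA; congr (_ * _); by rewrite mulrC.
Qed.

Lemma qb_small (m l : nat) : (m < l)%N -> qbinom m l = 0.
Proof.
move=> hml; rewrite qbE /num (bigD1 (Ordinal hml)) //= subrr expr0z subrr.
by rewrite !mul0r.
Qed.

Lemma pascal_aux (F : fieldType) (A D e Q : F) : D != 0 -> 1 - Q != 0 ->
 (1 - e * Q) * A / (D * (1 - Q)) = A * (1 - e) / (D * (1 - Q)) + e * (A / D).
Proof. move=> h1 h2. field. by rewrite h1 h2. Qed.

Lemma qPascal (m : int) (l : nat) :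
  qbinom m l.+1 = qbinom (m - 1) l.+1 + q ^ (m - l.+1%:Z) * qbinom (m - 1) l.
Proof.
rewrite !qbE numSl numSr denS.
have hm : q ^ m = q ^ (m - l.+1%:Z) * q ^+ l.+1.
  by rewrite -[q ^+ l.+1]/(q ^ (l.+1%:Z)) -qD; congr (_ ^ _); lia.
have -> : m - 1 - l%:Z = m - l.+1%:Z by lia.
rewrite hm.
have h1 := den_neq0 l.
have h2 : 1 - q ^+ l.+1 != 0 by rewrite subr_eq0 eq_sym qXn_neq1.
move: (num (m - 1) l) (den l) (q ^ (m - l.+1%:Z)) (q ^+ l.+1) h1 h2 => A D e Q h1 h2.
exact: pascal_aux.

Qed.

Lemma qbSl_aux (F : fieldType) (X A D Q : F) : D != 0 -> 1 - Q != 0 ->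
  X * A / (D * (1 - Q)) = X / (1 - Q) * (A / D).
Proof. move=> h1 h2. field. by rewrite h1 h2. Qed.

Lemma qbSl m (l : nat) :
  qbinom m l.+1 = (1 - q ^ m) / (1 - q ^+ l.+1) * qbinom (m - 1) l.
Proof.
rewrite !qbE numSl denS; apply: qbSl_aux; first exact: den_neq0.
by rewrite subr_eq0 eq_sym qXn_neq1.
Qed.

Lemma neg_aux (F : fieldType) (s e B t Q : F) : t != 0 -> 1 - Q != 0 ->
  s * e * B * (1 - t) / (1 - Q) = (-1 * s) * (e * t) * ((1 - t^-1) / (1 - Q) * B).
Proof. move=> h1 h2. field. by rewrite h1 h2. Qed.

Lemma qbneg (m : int) (l : nat) :
  qbinom m l = (-1) ^+ l * q ^ (l%:Z * m - ('C(l, 2))%:Z) * qbinom (l%:Z - m - 1) l.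
Proof.
elim: l => [|l IH].
  by rewrite !qb0 expr0 mul1r mulr1 mul0r subrr expr0z.
rewrite qbSr IH qbSl.
have -> : l.+1%:Z - m - 1 - 1 = l%:Z - m - 1 by lia.
have -> : l.+1%:Z - m - 1 = - (m - l%:Z) by lia.
rewrite qN.
have -> : q ^ (l.+1%:Z * m - ('C(l.+1, 2))%:Z) = q ^ (l%:Z * m - ('C(l, 2))%:Z) * q ^ (m - l%:Z).
  rewrite -qD binS bin1; congr (_ ^ _); lia.
rewrite [(-1) ^+ l.+1]exprS; apply: neg_aux; first by rewrite expfz_neq0 // q_neq0.
by rewrite subr_eq0 eq_sym qXn_neq1.
Qed.

Definition VL (a b : int) (p : nat) : Qq :=
  \sum_(u < p.+1) qbinom a ((p - u)%N : int) * qbinom b u * q ^ (u%:Z * (a - p%:Z + u%:Z)).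

Lemma rearr_aux (F : comNzRingType) (x y e1 e2 e3 e4 : F) :
  e1 * e2 = e3 * e4 -> x * (e1 * y) * e2 = e3 * (x * y * e4).
Proof.
move=> h; transitivity (x * y * (e1 * e2)); first by ring.
by rewrite h; ring.
Qed.

Lemma VLrec a b p :
  VL a b p.+1 = VL a (b - 1) p.+1 + q ^ (a + b - p.+1%:Z) * VL a (b - 1) p.
Proof.
rewrite /VL big_ord_recl [in RHS]big_ord_recl !qb0 -[in RHS]addrA; congr (_ + _).
have L0 (i : 'I_p.+1) : (lift ord0 i : nat) = i.+1 by [].
under eq_bigr => i _ do rewrite L0 qPascal mulrDr mulrDl.
under [in RHS]eq_bigr => i _ do rewrite L0.
rewrite big_split /=; congr (_ + _).
rewrite mulr_sumr; apply: eq_bigr => i _ /=; rewrite subSS.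
apply: rearr_aux; rewrite -!qD; congr (_ ^ _); lia.
Qed.

Lemma VL0 a b : VL a b 0 = 1.
Proof. by rewrite /VL big_ord1 subn0 !qb0 mul0r expr0z !mulr1. Qed.

Lemma VLb0 a p : VL a 0 p = qbinom a p.
Proof.
rewrite /VL big_ord_recl subn0 qb0 mul0r expr0z !mulr1 big1 ?addr0 //.
move=> i _; by rewrite qb_small // mulr0 mul0r.
Qed.

Lemma qvdm_pos a (n : nat) p : VL a n%:Z p = qbinom (a + n%:Z) p.
Proof.
elim: n p => [|n IH] p; first by rewrite addr0 VLb0.
case: p => [|p]; first by rewrite VL0 qb0.
rewrite VLrec.
have -> : n.+1%:Z - 1 = n%:Z by lia.
rewrite !IH [in RHS]qPascal.
have -> : a + n.+1%:Z - 1 = a + n%:Z by lia.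
congr (_ + _ * _); congr (_ ^ _); lia.
Qed.

Lemma qvdm_neg a (n : nat) p : VL a (- n%:Z) p = qbinom (a - n%:Z) p.
Proof.
elim: n p => [|n IH] p; first by rewrite oppr0 subr0 VLb0.
elim: p => [|p IHp]; first by rewrite VL0 qb0.
have := VLrec a (- n%:Z) p.
have -> : - n%:Z - 1 = - n.+1%:Z by lia.
rewrite IH IHp qPascal.
have -> : a - n%:Z - 1 = a - n.+1%:Z by lia.
by move/addIr.
Qed.

Lemma qvdm a b p : VL a b p = qbinom (a + b) p.
Proof.
case: b => n; first exact: qvdm_pos.
rewrite NegzE; exact: qvdm_neg.
Qed.

Section Fib.
Variable k : nat.
Hypothesis hk : (1 <= k)%N.

Lemma qfib_fuelE f1 f2 n : (n < f1)%N -> (n < f2)%N -> qfib_fuel f1 k n = qfib_fuel f2 k n.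
Proof.
elim: f1 f2 n => [|f1 IH] [|f2] n //= h1 h2.
case: ltnP => // hkn.
rewrite (IH f2 (n - 1)%N) ?(IH f2 (n - k)%N) //; lia.
Qed.

Lemma qfibE n : qfib k n = if (n < k)%N then 'X^n
  else 'X * qfib k (n - 1) + (q ^+ (n - k))%:P * qfib k (n - k).
Proof.
rewrite /qfib /=; case: ltnP => // hkn.
rewrite (qfib_fuelE n (n - 1).+1) ?(qfib_fuelE n (n - k).+1) //; lia.
Qed.

Lemma qfib_coef n :
  (forall l, (k * l <= n)%N ->
     (qfib k n)`_(n - k * l) = q ^+ (k * 'C(l, 2)) * qbinom (n%:Z - ((k - 1) * l)%N%:Z) l)
  /\ (forall d, (forall l, (k * l <= n)%N -> d != (n - k * l)%N) -> (qfib k n)`_d = 0).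
Proof.
elim/ltn_ind: n => n IH.
rewrite qfibE; case: ltnP => [hnk|hkn].
  split.
    move=> l hl; have -> : l = 0%N by nia.
    by rewrite muln0 subn0 coefXn eqxx qb0 mulr1 expr0.
  move=> d hd; rewrite coefXn; have := hd 0%N; rewrite muln0 subn0 => /(_ isT).
  by move/negbTE => ->.
have [IH1a IH1b] := IH (n - 1)%N ltac:(lia).
have [IHka IHkb] := IH (n - k)%N ltac:(lia).
split.
  move=> l hl; rewrite coefD coefXM coefCM.
  case: l hl => [|l] hl.
    rewrite muln0 subn0 (IHkb n); last by move=> l' _; apply/eqP; lia.
    rewrite mulr0 addr0; have -> : (n == 0%N) = false by apply/eqP; lia.
    rewrite -subn1; have := IH1a 0%N ltac:(lia); rewrite muln0 subn0 => ->.
    by rewrite !qb0.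
  have -> : (n - k * l.+1 = (n - k) - k * l)%N by lia.
  rewrite IHka; last by lia.
  have E1 : (if (n - k - k * l)%N == 0%N then 0 else (qfib k (n - 1))`_(n - k - k * l).-1)
       = q ^+ (k * 'C(l.+1, 2)) * qbinom ((n - 1)%N%:Z - ((k - 1) * l.+1)%N%:Z) l.+1.
    case: eqP => h0.
      have -> : ((n - 1)%N%:Z - ((k - 1) * l.+1)%N%:Z) = l%:Z by nia.
      by rewrite qb_small ?mulr0.
    have -> : ((n - k - k * l).-1 = (n - 1) - k * l.+1)%N by lia.
    by rewrite IH1a //; lia.
  rewrite E1 [in RHS]qPascal mulrDr; congr (_ + _).
    by congr (_ * qbinom _ _); nia.
  rewrite !mulrA; congr (_ * qbinom _ _); last by nia.
  rewrite -exprD -[LHS]/(q ^ ((n - k + k * 'C(l, 2))%N : int)) -[q ^+ (k * 'C(l.+1, 2))]/(q ^ ((k * 'C(l.+1, 2))%N : int)) -qD; congr (_ ^ _).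
  rewrite binS bin1; nia.
move=> d hd; rewrite coefD coefXM coefCM.
rewrite (IHkb d) ?mulr0 ?addr0; last first.
  move=> l hl; apply/eqP => h; have := hd l.+1 ltac:(nia); rewrite h; case/eqP; nia.
case: eqP => // hd0; apply: IH1b => l hl; apply/eqP => h.
have := hd l ltac:(nia); case/eqP; nia.
Qed.
End Fib.

Lemma hess (R : comNzRingType) m (f : nat -> nat -> R) (P : nat -> R) :
  (forall i j, (i.+1 < j)%N -> f i j = 0) ->
  (forall i, (i <= m)%N -> \sum_(j < m.+2) f i j * P j = 0) ->
  \det (\matrix_(i < m.+1, j < m.+1) f i j) * P 0%N
    = (-1) ^+ m.+1 * (\prod_(i < m.+1) f i i.+1) * P m.+1.
Proof.
move=> Hz Hrow.
set A := \matrix_(i < m.+1, j < m.+1) f i j.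
pose v : 'cV[R]_(m.+1) := \col_j P j.
have Av : A *m v = \col_i (- (f i m.+1 * P m.+1)).
  apply/matrixP => i j; rewrite !mxE.
  have := Hrow i (ltn_ord i); rewrite big_ord_recr /= => /eqP; rewrite addr_eq0 => /eqP <-.
  by apply: eq_bigr => l _; rewrite !mxE.
have key : (\det A) *: v = \adj A *m (A *m v) by rewrite mulmxA mul_adj_mx mul_scalar_mx.
have := congr1 (fun M : 'cV[R]_(m.+1) => M ord0 ord0) key; rewrite /= Av !mxE.
rewrite (bigD1 ord_max) //= big1 ?addr0; last first.
  move=> l hl; rewrite !mxE Hz; first by rewrite mul0r oppr0 mulr0.
  have := ltn_ord l; move: hl; rewrite -(inj_eq val_inj) /= => /eqP hl; lia.
move=> ->; rewrite !mxE /cofactor.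
rewrite det_trig; last first.
  apply/is_trig_mxP => i j hij; rewrite !mxE /= Hz //.
  have hi : (m <= i)%N = false by apply/negbTE; rewrite -ltnNge; exact: (ltn_ord i).
  rewrite /bump /= hi add0n; by rewrite add1n ltnS.
rewrite big_ord_recr /= addn0 exprS.
have -> : \prod_(i < m) (row' ord_max (col' ord0 A)) i i = \prod_(i < m) f i i.+1.
  apply: eq_bigr => i _; rewrite !mxE /= /bump /=.
  have := ltn_ord i => hi; congr (f _ _); lia.
by rewrite mulrN mulN1r !mulNr !mulrA.
Qed.

Lemma sum_shift (R : nmodType) (N s0 p : nat) (g : nat -> R) :
  (s0 + p < N)%N -> (forall j, (j < s0)%N -> g j = 0) -> (forall j, (s0 + p < j)%N -> g j = 0) ->
  \sum_(j < N) g j = \sum_(u < p.+1) g (s0 + u)%N.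
Proof.
move=> hN h1 h2.
rewrite -(big_mkord xpredT) (@big_cat_nat _ _ _ s0) /=; [|lia|lia].
rewrite [X in X + _]big_nat_cond big1 ?add0r; last by move=> j /andP [/andP [_ hj] _]; exact: h1.
rewrite (@big_cat_nat _ _ _ (s0 + p.+1)%N s0) /=; [|lia|lia].
rewrite [X in _ + X]big_nat_cond [X in _ + X]big1 ?addr0; last first.
  by move=> j /andP [/andP [hj _] _]; apply: h2; lia.
rewrite -{1}[s0]add0n big_addn (_ : (s0 + p.+1 - s0 = p.+1)%N) ?big_mkord; last by lia.
by apply: eq_bigr => u _; rewrite addnC.
Qed.

Lemma binD2 a b : 'C(a + b, 2) = ('C(a, 2) + a * b + 'C(b, 2))%N.
Proof.
elim: b => [|b IH]; first by rewrite (_ : 'C(0, 2) = 0%N) // addn0 muln0 !addn0.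
rewrite addnS binS bin1 IH binS bin1; lia.
Qed.

Lemma qn (n : nat) : q ^+ n = q ^ (n%:Z).
Proof. by []. Qed.

Lemma sgn2 (u : nat) : (-1) ^+ u * (-1) ^+ u = 1 :> Qq.
Proof. by rewrite -exprD addnn -mul2n exprM sqrrN !expr1n. Qed.

Section Main.
Variables k r : nat.
Hypothesis hk : (1 <= k)%N.
Hypothesis hr : (r < k)%N.

Definition wt (j : nat) : Qq := (-1) ^+ j / q ^+ ((k - 1) * 'C(j.+1, 2)).
Definition Acoef (i j : nat) : Qq := qbinom (i%:Z - k%:Z + r%:Z + 1) (i%:Z - j%:Z).
Definition Ccoef (i j : nat) : Qq :=
  q ^+ ((k - 1) * j)%N * qbinom (i%:Z + r%:Z + 1) (i%:Z - j%:Z + 1).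
Definition Fc (j d : nat) : Qq := (qfib k (k * j + r))`_d.

Lemma Fco j s : Fc j (k * s + r) = if (s <= j)%N then
   q ^+ (k * 'C(j - s, 2)) * qbinom ((k * j + r)%N%:Z - ((k - 1) * (j - s))%N%:Z) (j - s)%N
   else 0.
Proof.
rewrite /Fc; case: leqP => h.
  have := (qfib_coef k hk (k * j + r)).1 (j - s)%N ltac:(nia).
  by rewrite (_ : (k * j + r - k * (j - s) = k * s + r)%N) //; nia.
apply: (qfib_coef k hk (k * j + r)).2 => l hl; apply/eqP; nia.
Qed.

Lemma Fc_other j d : (d %% k != r)%N -> Fc j d = 0.
Proof.
move=> hd; apply: (qfib_coef k hk (k * j + r)).2 => l hl; apply/eqP => h.
have hlj : (l <= j)%N by nia.
have : d = (k * (j - l) + r)%N by nia.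
by move=> e; move: hd; rewrite e mulnC modnMDl modn_small ?eqxx.
Qed.

Lemma Csum i s N : (s <= i.+1)%N -> (i.+1 < N)%N ->
  \sum_(j < N) Ccoef i j * wt j * Fc j (k * s + r) =
  (-1) ^+ s * q ^ (- ((k - 1) * 'C(s, 2))%N%:Z) * qbinom (i%:Z - (k * s)%N%:Z) (i.+1 - s)%N.
Proof.
move=> hs hN.
rewrite (@sum_shift _ N s (i.+1 - s) (fun j => Ccoef i j * wt j * Fc j (k * s + r))); first last.
- move=> j hj; rewrite /Ccoef qb_neg ?mulr0 ?mul0r //; lia.
- by move=> j hj; rewrite Fco leqNgt hj /= mulr0.
- lia.
have -> : i%:Z - (k * s)%N%:Z = (i%:Z + r%:Z + 1) + (- ((k * s + r)%N%:Z) - 1) by lia.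
rewrite -qvdm /VL mulr_sumr; apply: eq_bigr => u _.
rewrite Fco leq_addr addKn.
have hu := ltn_ord u.
rewrite (qbneg (_ - _) u).
have -> : (u%:Z - ((k * (s + u) + r)%N%:Z - ((k - 1) * u)%N%:Z) - 1) = (- ((k * s + r)%N%:Z) - 1) by nia.
rewrite /Ccoef /wt exprD.
have -> : (i%:Z - (s + u)%N%:Z + 1) = ((i.+1 - s - u)%N : int) by lia.
set QA := qbinom _ ((i.+1 - s - u)%N : int).
set QB := qbinom _ u.
set E := (u%:Z * _ - _).
transitivity ((-1) ^+ s * ((-1) ^+ u * (-1) ^+ u) *
   (q ^+ ((k - 1) * (s + u)) * (q ^+ ((k - 1) * 'C((s + u).+1, 2)))^-1 * q ^+ (k * 'C(u, 2)) * q ^ E) * (QA * QB)).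
  by ring.
rewrite sgn2 mulr1 !qn invr_expz -!qD.
set Z := (u%:Z * _).
have -> : ((k - 1) * (s + u))%N%:Z + - ((k - 1) * 'C((s + u).+1, 2))%N%:Z + (k * 'C(u, 2))%N%:Z + E
   = - ((k - 1) * 'C(s, 2))%N%:Z + Z.
  rewrite /E /Z binS bin1 binD2; nia.
rewrite qD; ring.
Qed.

Lemma Asum i s N : (s <= i)%N -> (i.+1 < N)%N ->
  \sum_(j < N) Acoef i j * wt j * Fc j (k * s + r) =
  (-1) ^+ s * q ^ (- ((k - 1) * 'C(s.+1, 2))%N%:Z) * qbinom (i%:Z - (k * s.+1)%N%:Z) (i - s)%N.
Proof.
move=> hs hN.
rewrite (@sum_shift _ N s (i - s) (fun j => Acoef i j * wt j * Fc j (k * s + r))); first last.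
- move=> j hj; rewrite /Acoef qb_neg ?mul0r //; lia.
- by move=> j hj; rewrite Fco leqNgt hj /= mulr0.
- lia.
have -> : i%:Z - (k * s.+1)%N%:Z = (i%:Z - k%:Z + r%:Z + 1) + (- ((k * s + r)%N%:Z) - 1) by nia.
rewrite -qvdm /VL mulr_sumr; apply: eq_bigr => u _.
rewrite Fco leq_addr addKn.
have hu := ltn_ord u.
rewrite (qbneg (_ - _) u).
have -> : (u%:Z - ((k * (s + u) + r)%N%:Z - ((k - 1) * u)%N%:Z) - 1) = (- ((k * s + r)%N%:Z) - 1) by nia.
rewrite /Acoef /wt exprD.
have -> : (i%:Z - (s + u)%N%:Z) = ((i - s - u)%N : int) by lia.
set QA := qbinom _ ((i - s - u)%N : int).
set QB := qbinom _ u.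
set E := (u%:Z * _ - _).
transitivity ((-1) ^+ s * ((-1) ^+ u * (-1) ^+ u) *
   ((q ^+ ((k - 1) * 'C((s + u).+1, 2)))^-1 * q ^+ (k * 'C(u, 2)) * q ^ E) * (QA * QB)).
  by ring.
rewrite sgn2 mulr1 !qn invr_expz -!qD.
set Z := (u%:Z * _).
have -> : - ((k - 1) * 'C((s + u).+1, 2))%N%:Z + (k * 'C(u, 2))%N%:Z + E
   = - ((k - 1) * 'C(s.+1, 2))%N%:Z + Z.
  rewrite /E /Z binS bin1 binD2 binS bin1; nia.
rewrite qD; ring.
Qed.

Definition Bf (i j : nat) : {poly Qq} := (Acoef i j)%:P * 'X^k + (Ccoef i j)%:P.
Definition Pp (j : nat) : {poly Qq} := (wt j)%:P * qfib k (k * j + r).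

Lemma comm3 (R : comNzRingType) (a X b F : R) : a * X * (b * F) = a * b * (X * F).
Proof. by ring. Qed.

Lemma row_id i N : (i.+1 < N)%N -> \sum_(j < N) Bf i j * Pp j = 0.
Proof.
move=> hN; apply/polyP => d; rewrite coef0 coef_sum.
have term j : (Bf i j * Pp j)`_d = Acoef i j * wt j * (if (d < k)%N then 0 else Fc j (d - k))
    + Ccoef i j * wt j * Fc j d.
  rewrite /Bf /Pp mulrDl coefD; congr (_ + _).
    by rewrite comm3 -polyCM coefCM coefXnM /Fc; case: ifP => _; rewrite ?mulr0.
  by rewrite mulrA -polyCM coefCM.
under eq_bigr do rewrite term.
rewrite big_split /=.
case: (eqVneq (d %% k)%N r) => hd; last first.
  rewrite !big1 ?addr0 //.
    by move=> j _; rewrite Fc_other ?mulr0.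
  move=> j _; case: ltnP => hdk; rewrite ?mulr0 // Fc_other ?mulr0 //.
  by move: hd; rewrite -{1}(subnK hdk) modnDr.
have hdk : d = (k * (d %/ k) + r)%N by rewrite {1}(divn_eq d k) hd mulnC.
move: hdk; case: (d %/ k)%N => [|s] ->.
  rewrite big1; last by move=> j _; rewrite muln0 add0n hr mulr0.
  by rewrite add0r (Csum i 0 N) // muln0 subr0 subn0 qb_small ?mulr0.
have -> : (k * s.+1 + r < k)%N = false by apply/negbTE; rewrite -leqNgt; nia.
have -> : (k * s.+1 + r - k = k * s + r)%N by nia.
case: (leqP s i) => hsi.
  rewrite (Asum i s N) // (Csum i s.+1 N) // subSS exprS mulN1r !mulNr addrN //.
rewrite !big1 ?addr0 //.
  move=> j _; rewrite Fco; case: leqP => hsj; rewrite ?mulr0 //.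
  by rewrite /Ccoef (qb_neg _ (i%:Z - j%:Z + 1)) ?mulr0 ?mul0r //; lia.
move=> j _; rewrite Fco; case: leqP => hsj; rewrite ?mulr0 //.
by rewrite /Acoef qb_neg ?mul0r //; lia.
Qed.

End Main.

Theorem theorem6 (k r n : nat) (hk : (1 <= k)%N) (hr : (r < k)%N) (hn : (1 <= n)%N) :
  'X^r * \det (Bmat n k r) = qfib k (k * n + r).
Proof.
case: n hn => [//|m] _.
have HB : Bmat m.+1 k r = \matrix_(i < m.+1, j < m.+1) Bf k r i j.
  by apply/matrixP => i j; rewrite !mxE.
have H := @hess _ m (Bf k r) (Pp k r).
rewrite -HB in H.
have {H} := H ltac:(move=> i j hij; rewrite /Bf /Acoef /Ccoef !qb_neg ?mulr0 ?mul0r ?addr0 ?polyC0 //; lia)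
   (fun i hi => row_id k r hk hr i m.+2 ltac:(lia)).
have -> : Pp k r 0 = 'X^r.
  by rewrite /Pp /wt !muln0 add0n (qfibE k hk) hr !expr0 invr1 mulr1 polyC1 mul1r.
rewrite mulrC => ->.
have -> : \prod_(i < m.+1) Bf k r i i.+1 = (q ^+ ((k - 1) * 'C(m.+2, 2)))%:P.
  have hs : ('C(m.+2, 2) = \sum_(i < m.+1) i.+1)%N.
    by rewrite -bin2_sum big_nat_recl // big_mkord add0n.
  rewrite hs big_distrr /= -prodrXr rmorph_prod.
  apply: eq_bigr => i _; rewrite /Bf /Acoef /Ccoef qb_neg; last by lia.
  rewrite polyC0 mul0r add0r (_ : (i%:Z - i.+1%:Z + 1) = 0) ?qb0 ?mulr1 //; lia.
rewrite /Pp /wt -[(-1) ^+ m.+1 : {poly Qq}](rmorph_sign (polyC : Qq -> {poly Qq})).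
rewrite mulrA -!polyCM.
have -> : (-1) ^+ m.+1 * q ^+ ((k - 1) * 'C(m.+2, 2)) * ((-1) ^+ m.+1 / q ^+ ((k - 1) * 'C(m.+2, 2))) = 1.
  by rewrite mulrACA sgn2 mul1r divff // expf_neq0 // q_neq0.
by rewrite polyC1 mul1r.
Qed.
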